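(* Let $A$ be a binary $n\times m$ matrix with $R_{\mathbb{R}}(A)=R_{binary}(A)$. If $x_1,\dots,x_t$ are binary column vectors of length $n$ such that $R_{binary}(A|x_i)=R_{binary}(A)$ for all $1\le i\le t$, then $R_{\mathbb{R}}(A|x_1,\dots,x_t)=R_{\mathbb{R}}(A)$.
   Context: $R_{\mathbb{R}}$ is the usual rank over the reals. $R_{binary}(M)$ for a binary $p\times q$ matrix $M$ is the least $k$ with $M=UV$, $U\in\{0,1\}^{p\times k}$, $V\in\{0,1\}^{k\times q}$, ordinary arithmetic. $(A|x_1,\dots,x_t)$ denotes $A$ with the columns $x_1,\dots,x_t$ appended on the right. *)

(* Defs.v *)
From mathcomp Require Import all_boot all_order all_algebra.
From mathcomp Require Import Rstruct.
From Stdlib Require Import Rdefinitions.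
Set Implicit Arguments. Unset Strict Implicit. Unset Printing Implicit Defensive.
Import GRing.Theory.
Local Open Scope ring_scope.

(* Binary matrices are represented as boolean matrices; they are viewed as
   real 0/1 matrices through [realmx]. *)
Definition realmx (p q : nat) (M : 'M[bool]_(p, q)) : 'M[Rdefinitions.R]_(p, q) :=
  map_mx (fun b : bool => (b : nat)%:R) M.

Definition has_binary_factorization (p q k : nat) (M : 'M[bool]_(p, q)) : bool :=
  [exists U : 'M[bool]_(p, k), exists V : 'M[bool]_(k, q),
     realmx M == realmx U *m realmx V].

Lemma binary_factorization_exists (p q : nat) (M : 'M[bool]_(p, q)) :
  exists k : nat, has_binary_factorization k M.
Proof.
exists q; apply/existsP; exists M; apply/existsP; exists 1%:M.
apply/eqP; apply/matrixP => i j; rewrite !mxE.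
rewrite (bigD1 j) //= big1 ?addr0; last first.
  by move=> k /negbTE nkj; rewrite !mxE nkj /= mulr0.
by rewrite !mxE eqxx /= mulr1.
Qed.

Definition binary_rank (p q : nat) (M : 'M[bool]_(p, q)) : nat :=
  ex_minn (binary_factorization_exists M).

Definition real_rank (p q : nat) (M : 'M[bool]_(p, q)) : nat :=
  \rank (realmx M).

(* Main.v *)
Require Import Defs.
From mathcomp Require Import all_boot all_order all_algebra.
From mathcomp Require Import Rstruct.
Import GRing.Theory.
Local Open Scope ring_scope.

Lemma col_in_span (n m : nat) (A : 'M[bool]_(n, m)) (x : 'M[bool]_(n, 1)) :
  real_rank A = binary_rank A ->
  binary_rank (row_mx A x) = binary_rank A ->
  ((Defs.realmx x)^T <= (Defs.realmx A)^T)%MS.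
Proof.
move=> Hr Hb.
have Hf : has_binary_factorization (binary_rank (row_mx A x)) (row_mx A x).
  by rewrite /binary_rank; case: ex_minnP.
rewrite Hb in Hf.
move: Hf => /fintype.existsP [U /fintype.existsP [V /eqP HUV]].
have HRA : \rank (Defs.realmx A)^T = binary_rank A by rewrite mxrank_tr -Hr.
have Hsub : (col_mx (Defs.realmx A)^T (Defs.realmx x)^T <= (Defs.realmx U)^T)%MS.
  rewrite -tr_row_mx.
  have -> : row_mx (Defs.realmx A) (Defs.realmx x) = Defs.realmx (row_mx A x).
    by rewrite /Defs.realmx map_row_mx.
  by rewrite HUV trmx_mul submxMl.
have HA : ((Defs.realmx A)^T <= (Defs.realmx U)^T)%MS.
  by apply: submx_trans Hsub; apply: submx_trans (addsmxSl _ _) _; rewrite addsmxE.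
have Hx : ((Defs.realmx x)^T <= (Defs.realmx U)^T)%MS.
  by apply: submx_trans Hsub; apply: submx_trans (addsmxSr _ _) _; rewrite addsmxE.
have HUA : ((Defs.realmx U)^T <= (Defs.realmx A)^T)%MS.
  have := mxrank_leqif_sup HA => -[_ <-].
  rewrite eqn_leq; apply/andP; split; first exact: mxrankS.
  by rewrite HRA rank_leq_row.
exact: submx_trans Hx HUA.
Qed.

Theorem mainTheorem19 (n m t : nat) (A : 'M[bool]_(n, m)) (X : 'M[bool]_(n, t)) :
  real_rank A = binary_rank A ->
  (forall i : 'I_t, binary_rank (row_mx A (col i X)) = binary_rank A) ->
  real_rank (row_mx A X) = real_rank A.
Proof.
move=> Hr Hi.
have HX : ((Defs.realmx X)^T <= (Defs.realmx A)^T)%MS.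
  apply/row_subP => i.
  rewrite -tr_col.
  have -> : col i (Defs.realmx X) = Defs.realmx (col i X) by rewrite /Defs.realmx map_col.
  exact: col_in_span (Hi i).
rewrite /real_rank -mxrank_tr -[in RHS]mxrank_tr /Defs.realmx map_row_mx tr_row_mx.
by rewrite -addsmxE (addsmx_idPl HX).
Qed.
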